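(* Let $M=M(S^2;\frac{q_1}{p_1},\frac{q_2}{p_2},\frac{q_3}{p_3})$ with $e(M)\neq0$, and suppose at most one of $p_1,p_2,p_3$ is even. Then $x_M=0$ if and only if $p_1,p_2,p_3$ are weakly coprime.
   Context: $M(S^2;\frac{q_1}{p_1},\frac{q_2}{p_2},\frac{q_3}{p_3})$ ($(p_i,q_i)$ coprime, $p_i\ge1$) is the closed Seifert manifold obtained from $S_{0,3}\times S^1$ by gluing solid tori whose meridians are $p_ic_i+q_ih_i$; $e(M)=\sum_iq_i/p_i$; $\pi_1(M)=\langle c_1,c_2,c_3,h\mid [c_i,h]=1=c_i^{p_i}h^{q_i},\ c_1c_2c_3=1\rangle$. Weakly coprime: one of $p_1,p_2,p_3$ is coprime with each of the other two. An abelian character is the trace of a diagonal representation $\pi_1(M)\to\mathrm{SL}_2(\mathbb{C})$; it is exceptional if it is the trace of a representation $\rho$ with $\rho(h)=\pm I$ and $\rho(c_i)\neq\pm I$ for $i=1,2,3$; $x_M$ is the number of exceptional abelian characters. *)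

(* Defs.v *)
From HB Require Import structures.
From mathcomp Require Import all_boot all_order all_algebra.
From mathcomp Require Import complex.
From mathcomp Require Import Rstruct.
Set Implicit Arguments. Unset Strict Implicit. Unset Printing Implicit Defensive.
Import Order.TTheory GRing.Theory Num.Theory.
Local Open Scope ring_scope.

Definition C := complex Rdefinitions.R.

Definition mat := 'M[C]_2.

(* Generators of pi_1(M): 0,1,2 = c_1,c_2,c_3 ; 3 = h. *)
Definition gen_c (i : 'I_3) : 'I_4 := widen_ord (isT : 3 <= 4)%N i.
Definition gen_h : 'I_4 := ord_max.

Inductive word : Type :=
| Wone : word
| Wgen : 'I_4 -> word
| Wmul : word -> word -> word
| Winv : word -> word.

Fixpoint eval_word (rho : 'I_4 -> mat) (w : word) : mat :=
  match w with
  | Wone => 1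
  | Wgen k => rho k
  | Wmul u v => eval_word rho u * eval_word rho v
  | Winv u => (eval_word rho u)^-1
  end.

(* rho defines a representation pi_1(M) -> SL_2(C), where
   pi_1(M) = < c1,c2,c3,h | [c_i,h]=1 = c_i^{p_i} h^{q_i}, c1 c2 c3 = 1 >. *)
Definition is_SL2_rep (p : 'I_3 -> nat) (q : 'I_3 -> int) (rho : 'I_4 -> mat) : Prop :=
  (forall k, \det (rho k) = 1) /\
  (forall i, rho (gen_c i) * rho gen_h = rho gen_h * rho (gen_c i)) /\
  (forall i, rho (gen_c i) ^+ p i * rho gen_h ^ q i = 1) /\
  rho (gen_c 0) * rho (gen_c 1) * rho (gen_c 2%:R) = 1.

Definition character (rho : 'I_4 -> mat) : word -> C :=
  fun w => \tr (eval_word rho w).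

Definition abelian_character p q (chi : word -> C) : Prop :=
  exists rho, is_SL2_rep p q rho /\ (forall k, is_diag_mx (rho k)) /\
              (forall w, chi w = character rho w).

Definition exceptional_character p q (chi : word -> C) : Prop :=
  exists rho, is_SL2_rep p q rho /\ (forall w, chi w = character rho w) /\
    (rho gen_h = 1 \/ rho gen_h = -1) /\
    (forall i, rho (gen_c i) <> 1 /\ rho (gen_c i) <> -1).

Definition exceptional_abelian_character p q (chi : word -> C) : Prop :=
  abelian_character p q chi /\ exceptional_character p q chi.

Definition xM_eq0 p q : Prop := forall chi, ~ exceptional_abelian_character p q chi.

Definition euler_number (p : 'I_3 -> nat) (q : 'I_3 -> int) : rat :=
  \sum_(i < 3) (q i)%:~R / (p i)%:R.

Definition weakly_coprime (p : 'I_3 -> nat) : Prop :=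
  exists i : 'I_3, forall j : 'I_3, j != i -> coprime (p i) (p j).

(* Main.v *)
Require Import Defs.
From HB Require Import structures.
From mathcomp Require Import all_boot all_order all_algebra all_fingroup all_solvable all_field.
From mathcomp Require Import complex Rstruct.
From mathcomp Require Import zify ring lra.
Import GRing.Theory Num.Theory.
Local Open Scope ring_scope.

Lemma prim_exists n : (n > 0)%N -> exists z : C, n.-primitive_root z.
Proof.
pose p : {poly C} := 'X^n - 1; have [r Dp] := closed_field_poly_normal p.
move=> n_gt0; rewrite (monicP _) ?monicXnsubC // scale1r in Dp.
have rn1: all n.-unity_root r by apply/allP=> z; rewrite -root_prod_XsubC -Dp.
have sz_r: (n < (size r).+1)%N.
  by rewrite -(size_prod_XsubC r id) -Dp size_XnsubC.
have [|z] := hasP (has_prim_root n_gt0 rn1 _ sz_r); last by exists z.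
by rewrite -separable_prod_XsubC -Dp separable_Xn_sub_1 // pnatr_eq0 -lt0n.
Qed.

Lemma expr_gcd (x : C) m n : (0 < m)%N -> x ^+ m = 1 -> x ^+ n = 1 -> x ^+ gcdn m n = 1.
Proof.
move=> m0 hm hn; have [a _ /dvdnP[k hk]] := Bezoutl n m0.
have : x ^+ (gcdn m n + a * n) = 1 by rewrite hk mulnC exprM hm expr1n.
by rewrite exprD mulnC exprM hn expr1n mulr1.
Qed.

Lemma exists_abc (pc pj pk : nat) : (1 < gcdn pc pj)%N -> (1 < gcdn pc pk)%N ->
  odd (gcdn pc pj) -> odd (gcdn pc pk) ->
  exists ac aj ak : C, [/\ ac ^+ pc = 1, aj ^+ pj = 1, ak ^+ pk = 1, ac * aj * ak = 1 &
     [/\ ac ^+ 2 != 1, aj ^+ 2 != 1 & ak ^+ 2 != 1]].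
Proof.
set u := gcdn pc pj; set v := gcdn pc pk => hu hv ou ov.
have [z hz] := (@prim_exists (u * v)%N ltac:(nia)).
have z0 : z != 0.
  apply/eqP => z0; have := prim_expr_order hz; rewrite z0 expr0n.
  have -> : (u * v == 0)%N = false by lia.
  by move/eqP; rewrite eq_sym oner_eq0.
exists (z ^+ (u + v))^-1, (z ^+ v), (z ^+ u).
have dv (k : nat) : (z ^+ k == 1) = (u * v %| k)%N by rewrite (prim_order_dvd hz).
have uj : (u %| pj)%N by apply: dvdn_gcdr.
have uc : (u %| pc)%N by apply: dvdn_gcdl.
have vk : (v %| pk)%N by apply: dvdn_gcdr.
have vc : (v %| pc)%N by apply: dvdn_gcdl.
split.
- rewrite exprVn -exprM; apply/eqP; rewrite invr_eq1 dv mulnDl dvdn_add //.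
    by rewrite dvdn_pmul2l //; lia.
  by rewrite (mulnC v pc) dvdn_pmul2r //; lia.
- by apply/eqP; rewrite -exprM dv (mulnC v pj) dvdn_pmul2r //; lia.
- by apply/eqP; rewrite -exprM dv dvdn_pmul2l //; lia.
- by rewrite -mulrA -exprD addnC mulVf // expf_neq0.
split.
- rewrite exprVn -exprM invr_eq1 dv; apply/negP => H.
  have : (u * v %| u + v)%N.
    by move: H; rewrite (mulnC (u + v)) Gauss_dvdr // coprimen2 oddM ou ov.
  move/dvdn_leq; lia.
- rewrite -exprM dv (mulnC v 2%N) dvdn_pmul2r; last lia.
  apply/negP => /dvdn_leq le; have u2 : u = 2%N by lia.
  by rewrite u2 in ou.
- rewrite -exprM dv dvdn_pmul2l; last lia.
  apply/negP => /dvdn_leq le; have v2 : v = 2%N by lia.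
  by rewrite v2 in ov.
Qed.

Definition D (x : C) : mat := diag_mx (\row_(j < 2) (if j == 0 then x else x^-1)).

Lemma D00 x : D x 0 0 = x. Proof. by rewrite /D !mxE. Qed.

Lemma DM x y : D x * D y = D (x * y).
Proof.
rewrite /D -mulmxE mulmx_diag; congr diag_mx; apply/rowP => j; rewrite !mxE.
by case: ifP => _ //; rewrite invfM mulrC.
Qed.

Lemma D1 : D 1 = 1.
Proof.
apply/matrixP => i j; rewrite /D !mxE.
by case: i => [[|[|]]] // ?; case: j => [[|[|]]] //= ?; rewrite ?invr1.
Qed.

Lemma DX x n : D x ^+ n = D (x ^+ n).
Proof. elim: n => [|n IH]; first by rewrite !expr0 D1. by rewrite exprS IH DM exprS. Qed.

Lemma detD x : x != 0 -> \det (D x) = 1.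
Proof. by move=> x0; rewrite det_diag !big_ord_recl big_ord0 !mxE /= mulr1 mulfV. Qed.

Lemma D_pm1 x : D x = 1 \/ D x = -1 -> x ^+ 2 = 1.
Proof.
move=> h; have : D x 0 0 = 1 \/ D x 0 0 = -1 by case: h => ->; [left|right]; rewrite ?mxE.
by rewrite D00 => -[] ->; rewrite ?sqrrN expr1n.
Qed.

Lemma nz_of_pow (x : C) n : (0 < n)%N -> x ^+ n = 1 -> x != 0.
Proof.
move=> n0 h; apply/eqP => x0; move: h; rewrite x0 expr0n.
by case: n n0 => // n _ /eqP; rewrite eq_sym oner_eq0.
Qed.

Lemma gen_c_neq_h i : (gen_c i == gen_h) = false.
Proof. by apply/negbTE; rewrite -val_eqE /= neq_ltn ltn_ord. Qed.

Lemma inord_gen_c i : inord (gen_c i) = i :> 'I_3.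
Proof. by apply: val_inj; rewrite /= inordK. Qed.

Lemma build p q (a : 'I_3 -> C) : (forall i, (0 < p i)%N) ->
  (forall i, a i ^+ p i = 1) -> a 0 * a 1 * a 2%:R = 1 ->
  (forall i, a i ^+ 2 != 1) -> ~ xM_eq0 p q.
Proof.
move=> hp ha hprod hsq H.
pose rho (k : 'I_4) : mat := if k == gen_h then 1 else D (a (inord k)).
have rc i : rho (gen_c i) = D (a i) by rewrite /rho gen_c_neq_h inord_gen_c.
have rh : rho gen_h = 1 by rewrite /rho eqxx.
have anz i : a i != 0 by apply: (@nz_of_pow _ (p i) (hp i) (ha i)).
have rep : is_SL2_rep p q rho.
  split; [|split; [|split]].
  - move=> k; rewrite /rho; case: ifP => _; first by rewrite det1.
    exact: detD.
  - by move=> i; rewrite rh mulr1 mul1r.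
  - by move=> i; rewrite rc rh exp1rz mulr1 DX ha D1.
  - by rewrite !rc !DM hprod D1.
apply: (H (character rho)); split.
- exists rho; split => //; split => // k; rewrite /rho; case: ifP => _.
    exact: scalar_mx_is_diag.
  exact: diag_mx_is_diag.
- exists rho; split => //; split => //; split; first by left.
  move=> i; rewrite rc; split => h; apply/negP: (hsq i); rewrite negbK;
    apply/eqP; apply: D_pm1; [left|right]; exact h.
Qed.


Ltac fixo :=
  try (rewrite (_ : @lift 2 0 0 = 1); last exact: val_inj);
  try (rewrite (_ : @lift 2 ord0 0 = 1); last exact: val_inj);
  try (rewrite (_ : @lift 2 ord0 ord0 = 1); last exact: val_inj);
  try (rewrite (_ : @lift 2 1 0 = 0); last exact: val_inj);
  try (rewrite (_ : @ord0 1 = 0); last exact: val_inj).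

Lemma det22 (A : mat) : \det A = A 0 0 * A 1 1 - A 0 1 * A 1 0.
Proof.
rewrite (expand_det_row _ 0) !big_ord_recl big_ord0 /cofactor !det_mx11 !mxE /=.
fixo.
rewrite /bump /= expr0 expr1. ring.
Qed.

Lemma mul00 (X A : mat) : A 1 0 = 0 -> (X * A) 0 0 = X 0 0 * A 0 0.
Proof.
move=> h; rewrite -mulmxE mxE !big_ord_recl big_ord0 /=.
fixo.
by rewrite h mulr0 !addr0.
Qed.

Lemma tr22 (A : mat) : \tr A = A 0 0 + A 1 1.
Proof. rewrite /mxtrace !big_ord_recl big_ord0 /=.
by fixo; rewrite addr0. Qed.

Lemma o2 (i : 'I_2) : i = 0 \/ i = 1.
Proof. case: i => [[|[|]]] // ?; [left|right]; exact: val_inj. Qed.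

Lemma unip (A : mat) (s : C) (n : nat) : s ^+ 2 = 1 -> \det A = 1 -> \tr A = s *+ 2 ->
  (0 < n)%N -> (A ^+ n = 1 \/ A ^+ n = -1) -> A = s%:M.
Proof.
move=> hs hdet htr n0 hpow.
rewrite det22 in hdet; rewrite tr22 in htr.
set a := A 0 0 in hdet htr *; set b := A 0 1 in hdet *; set c := A 1 0 in hdet *;
  set d := A 1 1 in hdet htr *.
have Hs : s ^+ 2 - 1 = 0 by rewrite hs subrr.
have Htr : a + d - s *+ 2 = 0 by rewrite htr subrr.
have Hdet : a * d - b * c - 1 = 0 by rewrite hdet subrr.
have s0 : s != 0 by apply/eqP => s0; move: hs; rewrite s0 expr0n /= => /eqP; rewrite eq_sym oner_eq0.
set N : mat := s *: A - 1.
have NE i j : N i j = s * A i j - (i == j)%:R by rewrite !mxE.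
have NN : N * N = 0.
  apply/matrixP => i j; rewrite -mulmxE mxE !big_ord_recl big_ord0 /=; fixo.
  rewrite !NE [(0 : mat) i j]mxE.
  case: (o2 i) => ->; case: (o2 j) => -> /=; rewrite -/a -/b -/c -/d.
  all: try (rewrite eqxx).
  - transitivity ((s^+2 - 1) * (s * a *+ 2 - 1) + s^+2 * a * (a + d - s *+ 2) - s^+2 * (a * d - b * c - 1)).
      by ring.
    by rewrite Hs Htr Hdet; ring.
  - transitivity (s^+2 * b * (a + d - s *+ 2) + s * b *+ 2 * (s^+2 - 1)); first by ring.
    by rewrite Hs Htr; ring.
  - transitivity (s^+2 * c * (a + d - s *+ 2) + s * c *+ 2 * (s^+2 - 1)); first by ring.
    by rewrite Hs Htr; ring.
  - transitivity ((s^+2 - 1) * (s * d *+ 2 - 1) + s^+2 * d * (a + d - s *+ 2) - s^+2 * (a * d - b * c - 1)).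
      by ring.
    by rewrite Hs Htr Hdet; ring.
have AE : A = s *: (1 + N) by rewrite /N addrC subrK scalerA -expr2 hs scale1r.
have pw k : A ^+ k = s ^+ k *: (1 + N *+ k).
  elim: k => [|k IH]; first by rewrite !expr0 mulr0n addr0 scale1r.
  rewrite exprSr IH [X in _ * X]AE -scalerAl -scalerAr scalerA -exprSr.
  congr (_ *: _); rewrite mulrDl mulrDr !mul1r mulrDr mulr1 mulrnAl NN mul0rn.
  by rewrite addr0 mulrS -[in LHS]addrA.
have E01 : (A ^+ n) 0 1 = 0 by case: hpow => ->; rewrite !mxE /= ?oppr0.
have E10 : (A ^+ n) 1 0 = 0 by case: hpow => ->; rewrite !mxE /= ?oppr0.
have E0011 : (A ^+ n) 0 0 = (A ^+ n) 1 1 by case: hpow => ->; rewrite !mxE /=.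
rewrite pw -scaler_nat !mxE /= in E01 E10 E0011.
have nz : n%:R != 0 :> C by rewrite pnatr_eq0 -lt0n.
have sn : s ^+ n != 0 by rewrite expf_neq0.
have hb : A 0 1 = 0.
  by move/eqP: E01; rewrite add0r subr0 !mulf_eq0 (negbTE sn) (negbTE nz) (negbTE s0) /= => /eqP.
have hc : A 1 0 = 0.
  by move/eqP: E10; rewrite add0r subr0 !mulf_eq0 (negbTE sn) (negbTE nz) (negbTE s0) /= => /eqP.
have had : A 1 1 = A 0 0 by apply/esym; move/(mulfI sn)/addrI/(mulfI nz)/addIr/(mulfI s0): E0011.
have has : a = s.
  have htr' : A 0 0 + A 1 1 = s *+ 2 := htr.
  have : A 0 0 *+ 2 = s *+ 2.
    rewrite mulr2n. rewrite -[X in _ + X]had. exact htr'.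
  move/eqP; rewrite -subr_eq0 -mulrnBl mulrn_eq0 /= subr_eq0.
  by move/eqP.
apply/matrixP => i j; rewrite [RHS]mxE.
case: (o2 i) => ->; case: (o2 j) => -> /=; rewrite ?mulr1n ?mulr0n //.
by rewrite had.
Qed.


Lemma one_scal : (1 : mat) = 1%:M. Proof. by []. Qed.
Lemma mone_scal : (-1 : mat) = (-1)%:M. Proof. by rewrite raddfN. Qed.

Lemma pm1_expz (H : mat) (z : int) : H = 1 \/ H = -1 -> H ^ z = 1 \/ H ^ z = -1.
Proof.
case=> ->; first by left; rewrite exp1rz.
case: z => n /=.
  by rewrite /exprz -signr_odd; case: (odd n); rewrite ?expr0 ?expr1; [right|left].
by rewrite /exprz -signr_odd; case: (odd _); rewrite ?expr0 ?expr1 ?invr1 ?invrN1; [right|left].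
Qed.

Lemma pow00 (A : mat) n : A 1 0 = 0 -> (A ^+ n) 0 0 = A 0 0 ^+ n.
Proof.
move=> h; elim: n => [|n IH]; first by rewrite !expr0 mxE.
by rewrite exprSr mul00 // IH exprSr.
Qed.

Lemma rel_pm1 (X H : mat) (qq : int) : H = 1 \/ H = -1 -> X * H ^ qq = 1 -> X = 1 \/ X = -1.
Proof.
move=> hH; case: (@pm1_expz H qq hH) => ->; first by rewrite mulr1; left.
by rewrite mulrN1 => /eqP; rewrite eqr_oppLR => /eqP; right.
Qed.

Lemma nt (x y z : C) (px py pz : nat) : (0 < px)%N -> coprime px py -> coprime px pz ->
  x ^+ (2 * px) = 1 -> y ^+ (2 * py) = 1 -> z ^+ (2 * pz) = 1 -> x * y * z = 1 -> x ^+ 2 = 1.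
Proof.
move=> px0 cy cz hx hy hz hprod.
have ey : y ^+ (2 * (py * pz)) = 1 by rewrite mulnA exprM hy expr1n.
have ez : z ^+ (2 * (py * pz)) = 1 by rewrite (mulnC py) mulnA exprM hz expr1n.
have hx' : x ^+ (2 * (py * pz)) = 1.
  have : (x * y * z) ^+ (2 * (py * pz)) = 1 by rewrite hprod expr1n.
  by rewrite !exprMn ey ez !mulr1.
have := @expr_gcd x (2 * px)%N (2 * (py * pz))%N ltac:(lia) hx hx'.
rewrite -muln_gcdr.
have /eqP -> : coprime px (py * pz) by rewrite coprimeMr cy cz.
by rewrite muln1.
Qed.

Lemma scal_pm1 (s : C) : s ^+ 2 = 1 -> s%:M = 1 :> mat \/ s%:M = -1 :> mat.
Proof.
move/eqP; rewrite sqrf_eq1 => /orP[] /eqP ->; first by left.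
by right; rewrite mone_scal.
Qed.

Lemma diag_scal (X : mat) (s : C) : s ^+ 2 = 1 -> X 0 1 = 0 -> X 1 0 = 0 -> \det X = 1 ->
  \tr X = s *+ 2 -> X = s%:M.
Proof.
move=> hs h01 h10; rewrite det22 tr22 h01 h10 mulr0 subr0 => hd ht.
have hts : X 0 0 = s.
  have : (X 0 0 - s) ^+ 2 = 0.
    transitivity (X 0 0 * (X 0 0 + X 1 1 - s *+ 2) - (X 0 0 * X 1 1 - 1) + (s ^+ 2 - 1)).
      by ring.
    by rewrite ht hd hs !subrr mulr0 subr0 addr0.
  by move/eqP; rewrite sqrf_eq0 subr_eq0 => /eqP.
have hbs : X 1 1 = s.
  by move: ht; rewrite hts mulr2n => /addrI.
apply/matrixP => i j; rewrite [RHS]mxE.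
by case: (o2 i) => ->; case: (o2 j) => -> /=; rewrite ?mulr1n ?mulr0n.
Qed.


Lemma o3 (i : 'I_3) : i = 0 \/ i = 1 \/ i = 2%:R.
Proof. case: i => [[|[|[|]]]] // ?; [left|right;left|right;right]; exact: val_inj. Qed.

Lemma forward p q : (forall i, (0 < p i)%N) -> weakly_coprime p -> xM_eq0 p q.
Proof.
move=> hp [c hc] chi [[r1 [[det1 [_ [rel1 prod1]]] [diag1 ch1]]] [r2 [[det2 [_ [rel2 _]]] [ch2 [h2 c2]]]]].
have trg k : \tr (r1 k) = \tr (r2 k).
  change (character r1 (Wgen k) = character r2 (Wgen k)); by rewrite -ch1 -ch2.
have z01 k : r1 k 0 1 = 0 by move/is_diag_mxP: (diag1 k); apply.
have z10 k : r1 k 1 0 = 0 by move/is_diag_mxP: (diag1 k); apply.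
have [s [hs hsh]] : exists s : C, s ^+ 2 = 1 /\ r2 gen_h = s%:M.
  by case: h2 => ->; [exists 1; rewrite expr1n | exists (-1); rewrite sqrrN expr1n -mone_scal].
have h1 : r1 gen_h = 1 \/ r1 gen_h = -1.
  suff -> : r1 gen_h = s%:M by apply: scal_pm1.
  apply: diag_scal; [exact: hs|exact: z01|exact: z10|exact: det1|].
  by rewrite trg hsh mxtrace_scalar.
pose al i := r1 (gen_c i) 0 0.
have hal i : al i ^+ (2 * p i) = 1.
  rewrite /al mulnC exprM.
  case: (@rel_pm1 _ _ _ h1 (rel1 i)) => /(congr1 (fun M : mat => M 0 0)); rewrite pow00 // => ->;
    by rewrite !mxE /= ?sqrrN expr1n.
have hprod : al 0 * al 1 * al 2%:R = 1.
  have := congr1 (fun M : mat => M 0 0) prod1.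
  by rewrite /= mul00 ?z10 // mul00 ?z10 // mxE.
have hsq i : al i ^+ 2 != 1.
  apply/negP => /eqP ha2.
  have h2' : r2 gen_h = 1 \/ r2 gen_h = -1 by rewrite hsh; apply: scal_pm1.
  have hb : r1 (gen_c i) 1 1 = al i.
    have := det1 (gen_c i); rewrite det22 z01 z10 mulr0 subr0 -/(al i) => hd.
    apply: (mulfI (x := al i)); last by rewrite hd -expr2 ha2.
    by apply/eqP => a0; move: ha2; rewrite a0 expr0n => /eqP; rewrite eq_sym oner_eq0.
  have := @unip (r2 (gen_c i)) (al i) (p i) ha2 (det2 _) _ (hp i) (@rel_pm1 _ _ _ h2' (rel2 i)).
  rewrite -trg tr22 hb mulr2n => /(_ erefl) hr2.
  have [e|e] := @scal_pm1 _ ha2; rewrite e in hr2; by case: (c2 i).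
case: (o3 c) => [ec|[ec|ec]]; subst c.
- have := @nt _ _ _ _ _ _ (hp 0) (hc 1 isT) (hc 2%:R isT) (hal 0) (hal 1) (hal 2%:R) hprod.
  by move=> H; move: (hsq 0); rewrite H eqxx.
- have := @nt _ _ _ _ _ _ (hp 1) (hc 0 isT) (hc 2%:R isT) (hal 1) (hal 0) (hal 2%:R).
  rewrite (mulrC (al 1)) => /(_ hprod).
  by move=> H; move: (hsq 1); rewrite H eqxx.
- have := @nt _ _ _ _ _ _ (hp 2%:R) (hc 0 isT) (hc 1 isT) (hal 2%:R) (hal 0) (hal 1).
  rewrite -mulrA mulrC => /(_ hprod).
  by move=> H; move: (hsq 2%:R); rewrite H eqxx.
Qed.


Lemma build3 p q (x0 x1 x2 : C) : (forall i, (0 < p i)%N) ->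
  x0 ^+ p 0 = 1 -> x1 ^+ p 1 = 1 -> x2 ^+ p 2%:R = 1 -> x0 * x1 * x2 = 1 ->
  x0 ^+ 2 != 1 -> x1 ^+ 2 != 1 -> x2 ^+ 2 != 1 -> ~ xM_eq0 p q.
Proof.
move=> hp h0 h1 h2 hpr s0 s1 s2.
pose a (i : 'I_3) := if i == 0 then x0 else if i == 1 then x1 else x2.
have a0 : a 0 = x0 by [].
have a1 : a 1 = x1 by [].
have a2 : a 2%:R = x2 by [].
apply: (@build p q a hp).
- by move=> i; case: (o3 i) => [->|[->|->]]; rewrite ?a0 ?a1 ?a2.
- by rewrite a0 a1 a2.
- by move=> i; case: (o3 i) => [->|[->|->]]; rewrite ?a0 ?a1 ?a2.
Qed.

Lemma even_card (p : 'I_3 -> nat) i j : i != j -> ~~ odd (p i) -> ~~ odd (p j) ->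
  (2 <= #|[set k : 'I_3 | ~~ odd (p k)]|)%N.
Proof.
move=> ij oi oj; apply: (@leq_trans #|[set i; j]|); first by rewrite cards2 ij.
apply: subset_leq_card; apply/subsetP => k; rewrite !inE => /orP[] /eqP -> //.
Qed.

Lemma gcd_odd (p : 'I_3 -> nat) i j : (#|[set k : 'I_3 | ~~ odd (p k)]| <= 1)%N -> i != j ->
  odd (gcdn (p i) (p j)).
Proof.
move=> hc ij; apply/negPn/negP => ev.
have := @even_card p i j ij.
have di : ~~ odd (p i) by rewrite -dvdn2 (dvdn_trans _ (dvdn_gcdl _ (p j))) // dvdn2.
have dj : ~~ odd (p j) by rewrite -dvdn2 (dvdn_trans _ (dvdn_gcdr (p i) _)) // dvdn2.
by move/(_ di dj); rewrite leqNgt ltnS hc.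
Qed.

Lemma gcd_gt1 (p : 'I_3 -> nat) i j : (0 < p i)%N -> ~~ coprime (p i) (p j) -> (1 < gcdn (p i) (p j))%N.
Proof.
move=> hp; rewrite /coprime => h; have := gcdn_gt0 (p i) (p j); rewrite hp /=.
by move: h; case: (gcdn _ _) => [|[|]].
Qed.

Theorem corollary5p7 (p : 'I_3 -> nat) (q : 'I_3 -> int)
  (hp : forall i, (0 < p i)%N)
  (hcop : forall i, coprime (p i) `|q i|%N)
  (he : euler_number p q != 0)
  (heven : (#|[set i : 'I_3 | ~~ odd (p i)]| <= 1)%N) :
  xM_eq0 p q <-> weakly_coprime p.
Proof.
split; last exact: forward.
move=> H.
have center0 : ~~ coprime (p 0) (p 1) -> ~~ coprime (p 0) (p 2%:R) -> False.
  move=> n1 n2.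
  have [ac [aj [ak [e0 e1 e2 pr [s0 s1 s2]]]]] := @exists_abc _ _ _ (@gcd_gt1 p 0 _ (hp 0) n1)
    (@gcd_gt1 p 0 _ (hp 0) n2) (@gcd_odd p 0 1 heven isT) (@gcd_odd p 0 2%:R heven isT).
  exact: (@build3 p q _ _ _ hp e0 e1 e2 pr s0 s1 s2 H).
have center1 : ~~ coprime (p 1) (p 0) -> ~~ coprime (p 1) (p 2%:R) -> False.
  move=> n1 n2.
  have [ac [aj [ak [e0 e1 e2 pr [s0 s1 s2]]]]] := @exists_abc _ _ _ (@gcd_gt1 p 1 _ (hp 1) n1)
    (@gcd_gt1 p 1 _ (hp 1) n2) (@gcd_odd p 1 0 heven isT) (@gcd_odd p 1 2%:R heven isT).
  apply: (@build3 p q _ _ _ hp e1 e0 e2 _ s1 s0 s2 H).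
  by rewrite (mulrC aj).
have center2 : ~~ coprime (p 2%:R) (p 0) -> ~~ coprime (p 2%:R) (p 1) -> False.
  move=> n1 n2.
  have [ac [aj [ak [e0 e1 e2 pr [s0 s1 s2]]]]] := @exists_abc _ _ _ (@gcd_gt1 p 2%:R _ (hp 2%:R) n1)
    (@gcd_gt1 p 2%:R _ (hp 2%:R) n2) (@gcd_odd p 2%:R 0 heven isT) (@gcd_odd p 2%:R 1 heven isT).
  apply: (@build3 p q _ _ _ hp e1 e2 e0 _ s1 s2 s0 H).
  by rewrite -pr mulrC mulrA.
rewrite !(coprime_sym (p 2%:R)) (coprime_sym (p 1) (p 0)) in center1 center2.
case E01: (coprime (p 0) (p 1)); case E02: (coprime (p 0) (p 2%:R));
  case E12: (coprime (p 1) (p 2%:R)); rewrite ?E01 ?E02 ?E12 in center0 center1 center2;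
  try (exfalso; first [by apply: center0 | by apply: center1 | by apply: center2]).
all: first [ exists 0; (let j := fresh "j" in
  move=> j; case: (o3 j) => [->|[->|->]]; rewrite ?eqxx // => _;
  rewrite ?(coprime_sym (p 1) (p 0)) ?(coprime_sym (p 2%:R) (p 0)) ?(coprime_sym (p 2%:R) (p 1));
  by rewrite ?E01 ?E02 ?E12) | exists 1; (let j := fresh "j" in
  move=> j; case: (o3 j) => [->|[->|->]]; rewrite ?eqxx // => _;
  rewrite ?(coprime_sym (p 1) (p 0)) ?(coprime_sym (p 2%:R) (p 0)) ?(coprime_sym (p 2%:R) (p 1));
  by rewrite ?E01 ?E02 ?E12) | exists 2%:R; (let j := fresh "j" in
  move=> j; case: (o3 j) => [->|[->|->]]; rewrite ?eqxx // => _;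
  rewrite ?(coprime_sym (p 1) (p 0)) ?(coprime_sym (p 2%:R) (p 0)) ?(coprime_sym (p 2%:R) (p 1));
  by rewrite ?E01 ?E02 ?E12) ].
Qed.
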